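(* Let $w\ge100$ and let $\tilde x:[0,1]\to\mathbb R$ solve $$\tilde x'(s)=(w+1)-w\tanh\bigl(s\,\tilde x(s)\bigr),\qquad \tilde x(0)=x.$$ If $x>-2w+26\ln w$, then $\tilde x(1)\ge0$.
   Context: This ODE is the (time-reparametrized, $T\to\infty$ limit of the) guided probability flow ODE with guidance parameter $w$ toward the component $z=+1$ for the Gaussian mixture $\frac12\mathcal N(1,1)+\frac12\mathcal N(-1,1)$; $\tilde x(1)$ is the output sample for initialization $x$. *)

(* Defs.v *)
From Stdlib Require Import Reals.
From Coquelicot Require Import Coquelicot.
Open Scope R_scope.

(* xt : [0,1] -> R (represented as a total function R -> R; only its values on
   [0,1] matter) solves  xt'(s) = (w+1) - w tanh(s xt(s)),  xt(0) = x :
   xt is continuous on [0,1] (one-sided at the endpoints), differentiable on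
   (0,1) with the prescribed derivative, and xt 0 = x. *)
Definition solves_guided_ode (w x : R) (xt : R -> R) : Prop :=
  (forall s, 0 <= s <= 1 ->
     filterlim xt (within (fun t => 0 <= t <= 1) (locally s)) (locally (xt s))) /\
  (forall s, 0 < s < 1 ->
     is_derive xt s ((w + 1) - w * tanh (s * xt s))) /\
  xt 0 = x.

(* Main.v *)
Require Import Defs.
From Stdlib Require Import Reals.
From Coquelicot Require Import Coquelicot.
From Stdlib Require Import Lra Psatz.
Open Scope R_scope.

Lemma ballR x (e : posreal) y : Rabs (y - x) < e -> ball x e y.
Proof. intros H; exact H. Qed.
Lemma ballR' x (e : posreal) y : ball x e y -> Rabs (y - x) < e.
Proof. intros H; exact H. Qed.

Lemma tanh_eq y : tanh y = 1 - 2 / (exp (2 * y) + 1).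
Proof.
  unfold tanh, sinh, cosh.
  replace (2 * y) with (y + y) by ring. rewrite exp_plus, exp_Ropp.
  assert (exp y > 0) by apply exp_pos.
  field. split; nra.
Qed.

Lemma lb (xt df : R -> R) (m a b : R) :
  0 <= a -> a < b -> b <= 1 ->
  (forall s, 0 <= s <= 1 ->
     filterlim xt (within (fun t => 0 <= t <= 1) (locally s)) (locally (xt s))) ->
  (forall s, a < s < b -> is_derive xt s (df s)) ->
  (forall s, a < s < b -> m <= df s) ->
  m * (b - a) <= xt b - xt a.
Proof.
  intros Ha Hab Hb Hc Hd Hm.
  destruct (Rle_or_lt (m * (b - a)) (xt b - xt a)) as [H|H]; [exact H|].
  exfalso.
  set (eps := (m * (b - a) - (xt b - xt a)) / 4).
  assert (Heps : 0 < eps) by (unfold eps; lra).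
  pose proof (proj1 (filterlim_locally _ _) (Hc a (conj Ha (Rlt_le _ _ (Rlt_le_trans _ _ _ Hab Hb)))) (mkposreal eps Heps)) as HH1.
  unfold within, locally in HH1. destruct HH1 as [d1 Hd1].
  pose proof (proj1 (filterlim_locally _ _) (Hc b (conj (Rle_trans _ _ _ Ha (Rlt_le _ _ Hab)) Hb)) (mkposreal eps Heps)) as HH2.
  unfold within, locally in HH2. destruct HH2 as [d2 Hd2].
  set (d := Rmin (Rmin d1 d2) (Rmin ((b - a) / 4) (eps / (2 * (Rabs m + 1)))) / 2).
  assert (Hm0 : 0 <= Rabs m) by apply Rabs_pos.
  assert (Hq : 0 < eps / (2 * (Rabs m + 1))) by (apply Rdiv_lt_0_compat; lra).
  assert (Hd0 : 0 < d).
  { unfold d. pose proof (cond_pos d1); pose proof (cond_pos d2).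
    repeat apply Rmin_case; lra. }
  assert (Hdd1 : d < d1).
  { unfold d. pose proof (cond_pos d1). pose proof (Rmin_l (Rmin d1 d2) (Rmin ((b - a) / 4) (eps / (2 * (Rabs m + 1))))).
    pose proof (Rmin_l d1 d2). lra. }
  assert (Hdd2 : d < d2).
  { unfold d. pose proof (cond_pos d2). pose proof (Rmin_l (Rmin d1 d2) (Rmin ((b - a) / 4) (eps / (2 * (Rabs m + 1))))).
    pose proof (Rmin_r d1 d2). lra. }
  assert (Hdd3 : d < (b - a) / 4).
  { unfold d. pose proof (Rmin_r (Rmin d1 d2) (Rmin ((b - a) / 4) (eps / (2 * (Rabs m + 1))))).
    pose proof (Rmin_l ((b - a) / 4) (eps / (2 * (Rabs m + 1)))).
    pose proof (Rmin_l d1 d2). pose proof (cond_pos d1); pose proof (cond_pos d2).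
    assert (0 < Rmin (Rmin d1 d2) (Rmin ((b - a) / 4) (eps / (2 * (Rabs m + 1))))) by (repeat apply Rmin_case; lra).
    lra. }
  assert (Hdd4 : d <= eps / (2 * (Rabs m + 1))).
  { unfold d. pose proof (Rmin_r (Rmin d1 d2) (Rmin ((b - a) / 4) (eps / (2 * (Rabs m + 1))))).
    pose proof (Rmin_r ((b - a) / 4) (eps / (2 * (Rabs m + 1)))).
    pose proof (cond_pos d1); pose proof (cond_pos d2).
    assert (0 < Rmin (Rmin d1 d2) (Rmin ((b - a) / 4) (eps / (2 * (Rabs m + 1))))) by (repeat apply Rmin_case; lra).
    lra. }
  assert (Ha' : Rabs (xt (a + d) - xt a) < eps).
  { apply (ballR' _ (mkposreal eps Heps)). apply Hd1. apply ballR.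
    replace (a + d - a) with d by ring. rewrite Rabs_right; simpl; lra. lra. }
  assert (Hb' : Rabs (xt (b - d) - xt b) < eps).
  { apply (ballR' _ (mkposreal eps Heps)). apply Hd2. apply ballR.
    replace (b - d - b) with (- d) by ring. rewrite Rabs_Ropp, Rabs_right; simpl; lra. lra. }
  destruct (MVT_gen xt (a + d) (b - d) df) as [c [Hc1 Hc2]].
  { rewrite Rmin_left, Rmax_right by lra. intros x Hx. apply Hd. lra. }
  { rewrite Rmin_left, Rmax_right by lra. intros x Hx.
    apply continuity_pt_filterlim. apply (ex_derive_continuous (K:=R_AbsRing) (V:=R_NormedModule)).
    eexists. apply Hd. lra. }
  rewrite Rmin_left, Rmax_right in Hc1 by lra.
  assert (Hmc : m <= df c) by (apply Hm; lra).
  apply Rabs_def2 in Ha'. apply Rabs_def2 in Hb'.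
  assert (Hmd : (Rabs m + 1) * d <= eps / 2).
  { apply Rmult_le_reg_l with (r := / (Rabs m + 1)). apply Rinv_0_lt_compat; lra.
    rewrite <- Rmult_assoc, Rinv_l by lra.
    replace (/ (Rabs m + 1) * (eps / 2)) with (eps / (2 * (Rabs m + 1))) by (field; lra). lra. }
  pose proof (Rle_abs m). pose proof (Rle_abs (- m)). rewrite Rabs_Ropp in *.
  assert (df c * (b - d - (a + d)) >= m * (b - d - (a + d))) by nra.
  unfold eps in *. nra.
Qed.

Lemma ln_small (w : R) : 100 <= w -> 4 * ln w < w.
Proof.
  intros Hw.
  assert (H1 : 1 + w / 8 < exp (w / 8)) by (apply exp_ineq1; lra).
  assert (H2 : exp (w / 4) = exp (w / 8) * exp (w / 8)).
  { rewrite <- exp_plus. f_equal. field. }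
  assert (H3 : w < exp (w / 4)) by (rewrite H2; nra).
  assert (H4 : ln w < w / 4).
  { rewrite <- (ln_exp (w / 4)). apply ln_increasing; lra. }
  lra.
Qed.

Theorem lemma4p1 (w x : R) (xt : R -> R) :
  100 <= w ->
  solves_guided_ode w x xt ->
  x > -2 * w + 26 * ln w ->
  0 <= xt 1.
Proof.
  intros Hw [Hc [Hd H0]] Hx.
  set (df := fun s => (w + 1) - w * tanh (s * xt s)).
  assert (Hd' : forall s, 0 < s < 1 -> is_derive xt s (df s)) by exact Hd.
  assert (Htl : forall y, tanh y <= 1).
  { intro y. rewrite tanh_eq. pose proof (exp_pos (2 * y)).
    assert (0 < 2 / (exp (2 * y) + 1)) by (apply Rdiv_lt_0_compat; lra). lra. }
  assert (Hmono : forall a b, 0 <= a -> a < b -> b <= 1 -> 1 * (b - a) <= xt b - xt a).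
  { intros a b Ha Hab Hb. apply (lb xt df); auto.
    - intros s Hs; apply Hd'; lra.
    - intros s Hs. unfold df. pose proof (Htl (s * xt s)). nra. }
  destruct (Rle_or_lt 0 (xt 1)) as [H|Hneg]; [exact H|]. exfalso.
  assert (Hnegs : forall s, 0 <= s <= 1 -> xt s < 0).
  { intros s Hs. destruct (Req_dec s 1) as [->|Hs1]; [lra|].
    pose proof (Hmono s 1 ltac:(lra) ltac:(lra) ltac:(lra)). lra. }
  assert (Htn : forall y, y <= 0 -> tanh y <= 0).
  { intros y Hy. rewrite tanh_eq.
    assert (exp (2 * y) <= 1). { rewrite <- exp_0. destruct (Req_dec y 0) as [->|]. rewrite Rmult_0_r; lra.
      left; apply exp_increasing; lra. }
    pose proof (exp_pos (2 * y)).
    assert (2 / (exp (2 * y) + 1) >= 1).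
    { apply Rle_ge. apply Rmult_le_reg_r with (exp (2 * y) + 1). lra.
      unfold Rdiv. rewrite Rmult_assoc, Rinv_l by lra. lra. }
    lra. }
  assert (HW : forall a b, 0 <= a -> a < b -> b <= 1 -> (w + 1) * (b - a) <= xt b - xt a).
  { intros a b Ha Hab Hb. apply (lb xt df); auto.
    - intros s Hs; apply Hd'; lra.
    - intros s Hs. unfold df. pose proof (Hnegs s ltac:(lra)).
      pose proof (Htn (s * xt s) ltac:(nra)). nra. }
  set (L := ln w).
  assert (HL : 0 < L).
  { unfold L. rewrite <- ln_1. apply ln_increasing; lra. }
  assert (HL4 : 4 * L < w) by (apply ln_small; lra).
  set (delta := 2 * L / w).
  assert (Hdw : delta * w = 2 * L) by (unfold delta; field; lra).
  assert (Hdpos : 0 < delta) by (unfold delta; apply Rdiv_lt_0_compat; lra).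
  assert (Hdh : delta < 1 / 2).
  { apply Rmult_lt_reg_r with w. lra. nra. }
  set (E := exp ((w + 1) * delta)).
  assert (HE : w * w <= E).
  { unfold E. replace (w * w) with (exp (2 * L)).
    - assert (2 * L <= (w + 1) * delta) by nra.
      destruct (Req_dec (2 * L) ((w + 1) * delta)) as [->|]; [lra|].
      left; apply exp_increasing; lra.
    - replace (2 * L) with (L + L) by ring. rewrite exp_plus. unfold L. rewrite exp_ln; lra. }
  set (T := (E - 1) / (E + 1)).
  assert (HEp : 0 < E) by apply exp_pos.
  assert (HT1 : 1 - T = 2 / (E + 1)) by (unfold T; field; lra).
  assert (HT2 : w * (1 - T) <= 1).
  { rewrite HT1. apply Rmult_le_reg_r with (E + 1). lra.
    replace (w * (2 / (E + 1)) * (E + 1)) with (2 * w) by (field; lra). nra. }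
  assert (HT0 : 0 <= T).
  { unfold T. apply Rmult_le_pos. nra. left; apply Rinv_0_lt_compat; lra. }
  assert (HTm : forall y, y <= - ((w + 1) * delta / 2) -> tanh y <= - T).
  { intros y Hy. rewrite tanh_eq.
    assert (exp (2 * y) <= / E).
    { unfold E. rewrite <- exp_Ropp.
      destruct (Req_dec (2 * y) (- ((w + 1) * delta))) as [->|]; [lra|].
      left; apply exp_increasing; lra. }
    pose proof (exp_pos (2 * y)).
    assert (2 / (/ E + 1) <= 2 / (exp (2 * y) + 1)).
    { unfold Rdiv. apply Rmult_le_compat_l. lra. apply Rinv_le_contravar; lra. }
    assert (2 / (/ E + 1) = 1 + T) by (unfold T; field; lra).
    lra. }
  assert (Hmid : (w + 1 + w * T) * ((1 - delta) - delta) <= xt (1 - delta) - xt delta).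
  { apply (lb xt df); [lra|lra|lra|exact Hc| |].
    - intros s Hs; apply Hd'; lra.
    - intros s Hs. unfold df.
      pose proof (HW s 1 ltac:(lra) ltac:(lra) ltac:(lra)).
      assert (s * (1 - s) >= delta / 2) by nra.
      assert (Hsx : s * xt s <= - ((w + 1) * delta / 2)) by nra.
      pose proof (HTm _ Hsx). nra. }
  pose proof (HW 0 delta ltac:(lra) ltac:(lra) ltac:(lra)).
  pose proof (HW (1 - delta) 1 ltac:(lra) ltac:(lra) ltac:(lra)).
  rewrite H0 in *.
  assert (T <= 1).
  { assert (0 < 2 / (E + 1)) by (apply Rdiv_lt_0_compat; lra). lra. }
  assert (w * T * delta <= w * delta) by (apply Rmult_le_compat_r; [lra| nra]).
  unfold L in *. nra.
Qed.
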